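(* Let $d\geq 2$ and $U=(u_{ij})\in\mathcal{U}_d(\mathbb{C})$. If for some permutation matrix $\Pi$ and some $D\in\mathcal{DU}_d(\mathbb{C})$ $$\|U-D\Pi\|_{\mathrm{HS}}^2<2-2\sqrt{\frac{1+\frac{1}{\sqrt d}}{2}},$$ then Alice and Bob are not able to generate a maximally mutually coherent state with just three strokes of the coherence engine, i.e., there are no $l\in\{1,\dots,d\}$ and $D_1,D_2\in\mathcal{DU}_d(\mathbb{C})$ such that $D_2U^\dagger D_1U|l\rangle$ is maximally mutually coherent.
   Context: $\|\cdot\|_{\mathrm{HS}}$ is the Hilbert–Schmidt norm. $\mathcal{U}_d(\mathbb{C})$ denotes the group of $d\times d$ unitary matrices and $\mathcal{DU}_d(\mathbb{C})$ its subgroup of diagonal unitary matrices; $\{|j\rangle\}$ is the computational basis (Alice's basis) and Bob's basis is $\{U^\dagger|j\rangle\}$. Alice's free operations are $\mathcal{DU}_d(\mathbb{C})$, Bob's are $\{U^\dagger DU:D\in\mathcal{DU}_d(\mathbb{C})\}$; a three-stroke protocol: Alice prepares $|l\rangle$, Bob applies $U^\dagger D_1U$, Alice applies $D_2$. A pure state $|\psi\rangle$ is maximally mutually coherent if $|\langle j|\psi\rangle|=|\langle j|U|\psi\rangle|=1/\sqrt d$ for all $j$. *)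

(* Defs.v *)
From HB Require Import structures.
From mathcomp Require Import all_boot all_order all_fingroup all_algebra.
From mathcomp Require Import reals.
From mathcomp Require Import complex.
Set Implicit Arguments. Unset Strict Implicit. Unset Printing Implicit Defensive.
Import Order.TTheory GRing.Theory Num.Theory.
Local Open Scope ring_scope.
Local Open Scope complex_scope.

Definition adj {C : numClosedFieldType} {m n} (A : 'M[C]_(m, n)) : 'M[C]_(n, m) :=
  map_mx Num.conj (A^T).
(* unitary matrices: the library's  U \is unitarymx  (spectral.v) *)

Definition is_diag_unitary {C : numClosedFieldType} {d} (D : 'M[C]_d) : Prop :=
  exists v : 'rV[C]_d, D = diag_mx v /\ forall i, `|v 0 i| = 1.

Definition hs_norm2 {C : numClosedFieldType} {m n} (A : 'M[C]_(m, n)) : C :=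
  \sum_(i < m) \sum_(j < n) `|A i j| ^+ 2.

Definition ket {C : numClosedFieldType} {d} (l : 'I_d) : 'cV[C]_d := delta_mx l 0.

(* maximally mutually coherent w.r.t. bases {|j>} and {U^dagger |j>}:
   |<j|psi>| = |<j|U|psi>| = 1/sqrt d for all j *)
Definition max_mutually_coherent {C : numClosedFieldType} {d} (U : 'M[C]_d)
    (psi : 'cV[C]_d) : Prop :=
  forall j : 'I_d, `|psi j 0| = (sqrtC (d%:R : C))^-1 /\
                   `|(U *m psi) j 0| = (sqrtC (d%:R : C))^-1.

(* Main.v *)
Require Import Defs.
From HB Require Import structures.
From mathcomp Require Import all_boot all_order all_fingroup all_algebra.
From mathcomp Require Import reals.
From mathcomp Require Import complex.
From mathcomp Require Import ring.
Import Order.TTheory GRing.Theory Num.Theory.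
Local Open Scope ring_scope.

Section Gen.
Variable C : numClosedFieldType.

Lemma col_norm d (U : 'M[C]_d) (l : 'I_d) : U \is unitarymx ->
  \sum_j `|U j l| ^+ 2 = 1.
Proof.
move=> /unitarymxP /mulmx1C H.
have := congr1 (fun M : 'M[C]_d => M l l) H.
rewrite !mxE eqxx /= => H1; rewrite -[RHS]H1.
by apply: eq_bigr => j _; rewrite !mxE normCKC.
Qed.

Lemma psi_entry d (U D1 D2 : 'M[C]_d) (l : 'I_d) v1 v2 :
  D1 = diag_mx v1 -> D2 = diag_mx v2 ->
  (D2 *m adj U *m D1 *m U *m ket l) l 0 =
  v2 0 l * \sum_j v1 0 j * `|U j l| ^+ 2.
Proof.
move=> -> ->; rewrite -!mulmxA /ket -colE !mul_diag_mx !mxE; congr (_ * _).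
apply: eq_bigr => j _; rewrite /adj !mxE normCKC mulrCA; reflexivity.
Qed.

Lemma sq_le (x y : C) : 0 <= x -> x <= y -> x ^+ 2 <= y ^+ 2.
Proof. move=> x0 xy; rewrite !expr2; apply: ler_pM => //. Qed.

Lemma hs_col d (U D : 'M[C]_d) (s : 'S_d) v (l : 'I_d) :
  D = diag_mx v ->
  `|U ((s^-1)%g l) l - v 0 ((s^-1)%g l)| ^+ 2
    + \sum_(j | j != (s^-1)%g l) `|U j l| ^+ 2 <= hs_norm2 (U - D *m perm_mx s).
Proof.
move=> ->; set k := (s^-1)%g l.
rewrite /hs_norm2 [leRHS](bigD1 k) //=.
apply: lerD.
  rewrite [leRHS](bigD1 l) //= mul_diag_mx perm_mxEsub !mxE permKV eqxx mulr1.
  apply: ler_wpDr => //; apply: sumr_ge0 => *; exact: exprn_ge0.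
apply: ler_sum => j hj.
rewrite [leRHS](bigD1 l) //= mul_diag_mx perm_mxEsub !mxE.
have -> : (s j == l) = false.
  apply/negbTE; apply: contra hj => /eqP E; by rewrite /k -E permK.
rewrite mulr0 subr0; apply: ler_wpDr => //; apply: sumr_ge0 => *; exact: exprn_ge0.
Qed.

Lemma main_gen d (U : 'M[C]_d) (hU : U \is unitarymx) (s : 'S_d) (D : 'M[C]_d)
  (hD : is_diag_unitary D)
  (hclose : hs_norm2 (U - D *m perm_mx s) <
            2 - 2 * sqrtC ((1 + (sqrtC (d%:R : C))^-1) / 2)) :
  ~ exists (l : 'I_d) (D1 D2 : 'M[C]_d),
      is_diag_unitary D1 /\ is_diag_unitary D2 /\
      max_mutually_coherent U (D2 *m adj U *m D1 *m U *m ket l).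
Proof.
case=> l [D1 [D2 [[v1 [E1 hv1]] [[v2 [E2 hv2]] /(_ l) [hpsi _]]]]].
case: hD => v [ED hv].
rewrite (@psi_entry _ U _ _ l _ _ E1 E2) normrM hv2 mul1r in hpsi.
move: hpsi hclose.
set r := (sqrtC (d%:R : C))^-1 => hpsi hclose.
set k := (s^-1)%g l.
have hw := @col_norm _ U l hU.
rewrite (bigD1 k) //= in hw.
set S' := \sum_(j | j != k) _ in hw.
set a : C := `|U k l|.
have hS' : S' = 1 - a ^+ 2 by rewrite -hw addrAC subrr add0r.
have a0 : 0 <= a by exact: normr_ge0.
have hA : a ^+ 2 - S' <= r.
  rewrite -hpsi (bigD1 k) //=.
  apply: le_trans (lerB_normD _ _).
  apply: lerB.
    by rewrite normrM hv1 mul1r ger0_norm // exprn_ge0.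
  apply: le_trans (ler_norm_sum _ _ _) _.
  apply: ler_sum => j _; by rewrite normrM hv1 mul1r ger0_norm // exprn_ge0.
have hB := @hs_col _ U D s v l ED.
have hC : (1 - a) ^+ 2 <= `|U k l - v 0 k| ^+ 2.
  have h1 := ler_dist_dist (v 0 k) (U k l).
  rewrite hv distrC in h1.
  rewrite -real_normK; last by rewrite rpredB // ?ger0_real.
  by apply: sq_le.
have hD' : 2 - 2 * a < 2 - 2 * sqrtC ((1 + r) / 2).
  apply: le_lt_trans hclose; apply: le_trans hB.
  have -> : 2 - 2 * a = (1 - a) ^+ 2 + S' by rewrite hS'; ring.
  by rewrite lerD2r.
rewrite ltrD2l ltrN2 ltr_pM2l // in hD'.
have ht : (1 + r) / 2 < a ^+ 2.
  rewrite -[X in X < _]sqrtCK ltr_pXn2r // ?nnegrE ?sqrtC_ge0 //.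
  by rewrite divr_ge0 // addr_ge0 // /r invr_ge0 sqrtC_ge0 ler0n.
move: ht; rewrite ltr_pdivrMr // => ht.
have hA' : a ^+ 2 - S' + 1 <= r + 1 by rewrite lerD2r.
have E : a ^+ 2 - S' + 1 = a ^+ 2 * 2 by rewrite hS'; ring.
rewrite E in hA'.
have := lt_le_trans ht hA'.
by rewrite addrC ltxx.
Qed.
End Gen.

Theorem proposition16 (R : realType) (d : nat) (hd : (2 <= d)%N) (U : 'M[complex R]_d)
  (hU : U \is unitarymx) (s : 'S_d) (D : 'M[complex R]_d) (hD : is_diag_unitary D)
  (hclose : hs_norm2 (U - D *m perm_mx s) <
            2 - 2 * sqrtC ((1 + (sqrtC (d%:R : complex R))^-1) / 2)) :
  ~ exists (l : 'I_d) (D1 D2 : 'M[complex R]_d),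
      is_diag_unitary D1 /\ is_diag_unitary D2 /\
      max_mutually_coherent U (D2 *m adj U *m D1 *m U *m ket l).
Proof. move: hclose; apply: main_gen => //. Qed.
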